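(* Let $H_1<G_1$ and $H_2<G_2$ be groups and $K_1,K_2$ groups. If $H_1<G_1$ is relatively sofic over $K_1$ and $H_2<G_2$ is relatively sofic over $K_2$, then $H_1\times H_2<G_1\times G_2$ is relatively sofic over $K_1\times K_2$.
   Context: $H<G$ is relatively sofic over a group $K$ if there exist a sequence of inclusions of groups $(H_i<G_i)_{i\in\mathbb N}$ with all $G_i$ sofic and all $H_i$ amenable, a free ultrafilter $\omega$ on $\mathbb N$, and an embedding $\pi:G\to\prod_\omega(G_i\times K)$ into the algebraic ultraproduct such that $\pi(G)\cap\prod_\omega(H_i\times K)=\pi(H)$. The algebraic ultraproduct is $\prod_\omega L_i=(\prod_i L_i)/N$ with $N=\{(g_i):\{i:g_i=1\}\in\omega\}$. *)

(* Defs.v *)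
From mathcomp Require Import all_boot fingroup perm.
From Stdlib Require Import Reals ProofIrrelevance.

Set Implicit Arguments.
Unset Strict Implicit.
Unset Printing Implicit Defensive.

Record Grp := MkGroup {
  carrier :> Type;
  gmul : carrier -> carrier -> carrier;
  gone : carrier;
  ginv : carrier -> carrier;
  gmulA : forall x y z, gmul x (gmul y z) = gmul (gmul x y) z;
  gmul1l : forall x, gmul gone x = x;
  gmul1r : forall x, gmul x gone = x;
  gmulVl : forall x, gmul (ginv x) x = gone;
  gmulVr : forall x, gmul x (ginv x) = gone }.

Arguments gmul {g}.
Arguments gone {g}.
Arguments ginv {g}.

Record Subgroup (G : Grp) := MkSubgroup {
  smem :> G -> Prop;
  smem1 : smem gone;
  smemM : forall x y, smem x -> smem y -> smem (gmul x y);
  smemV : forall x, smem x -> smem (ginv x) }.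

Section SubGroupAsGroup.
Variables (G : Grp) (H : Subgroup G).
Definition sg_car := {x : G | H x}.
Definition sg_mul (a b : sg_car) : sg_car :=
  exist _ (gmul (proj1_sig a) (proj1_sig b)) (smemM (proj2_sig a) (proj2_sig b)).
Definition sg_one : sg_car := exist _ gone (smem1 H).
Definition sg_inv (a : sg_car) : sg_car := exist _ (ginv (proj1_sig a)) (smemV (proj2_sig a)).
Lemma sg_eq (a b : sg_car) : proj1_sig a = proj1_sig b -> a = b.
Proof. destruct a, b; simpl; intros ->; f_equal; apply proof_irrelevance. Qed.
Definition subgroup_group : Grp.
Proof.
refine (@MkGroup sg_car sg_mul sg_one sg_inv _ _ _ _ _); intros;
  apply sg_eq; simpl;
  [apply gmulA | apply gmul1l | apply gmul1r | apply gmulVl | apply gmulVr].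
Defined.
End SubGroupAsGroup.

Definition prod_group (G1 G2 : Grp) : Grp.
Proof.
refine (@MkGroup (G1 * G2)%type
          (fun a b => (gmul a.1 b.1, gmul a.2 b.2))
          (gone, gone)
          (fun a => (ginv a.1, ginv a.2)) _ _ _ _ _);
  intros; simpl;
  [rewrite !gmulA | rewrite !gmul1l | rewrite !gmul1r | rewrite !gmulVl | rewrite !gmulVr];
  destruct x; reflexivity.
Defined.

Definition prod_subgroup (G1 G2 : Grp) (H1 : Subgroup G1) (H2 : Subgroup G2)
  : Subgroup (prod_group G1 G2).
Proof.
refine (@MkSubgroup (prod_group G1 G2) (fun a => H1 a.1 /\ H2 a.2) _ _ _); simpl.
- split; apply smem1.
- intros x y [? ?] [? ?]; split; apply smemM; assumption.
- intros x [? ?]; split; apply smemV; assumption.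
Defined.

Definition amenable (G : Grp) : Prop :=
  exists m : (G -> Prop) -> R,
    (forall A, Rle 0 (m A)) /\
    m (fun _ => True) = 1%R /\
    (forall A B, (forall x, A x -> B x -> False) ->
       m (fun x => A x \/ B x) = Rplus (m A) (m B)) /\
    (forall (g : G) A, m (fun x => A (gmul (ginv g) x)) = m A).

Definition sofic (G : Grp) : Prop :=
  forall (F : seq G) (eps : R), Rlt 0 eps ->
    exists (n : nat) (phi : G -> {perm 'I_n}),
      (forall g h, List.In g F -> List.In h F ->
         Rlt (INR #|[set i : 'I_n | phi (gmul g h) i != phi g (phi h i)]|)
             (Rmult eps (INR n))) /\
      (forall g, List.In g F -> g <> gone ->
         Rlt (INR #|[set i : 'I_n | phi g i == i]|) (Rmult eps (INR n))).

Definition free_ultrafilter (U : (nat -> Prop) -> Prop) : Prop :=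
  U (fun _ => True) /\
  ~ U (fun _ => False) /\
  (forall A B : nat -> Prop, (forall i, A i -> B i) -> U A -> U B) /\
  (forall A B : nat -> Prop, U A -> U B -> U (fun i => A i /\ B i)) /\
  (forall A : nat -> Prop, U A \/ U (fun i => ~ A i)) /\
  (forall n : nat, U (fun i => n <= i)).

(* ---------- relative soficity ----------
   An embedding pi : G -> prod_omega (G_i x K) into the algebraic ultraproduct
   is represented by a lift G -> forall i, G_i x K (choice of representatives):
   - homomorphism: pi(gh) and pi(g)pi(h) agree omega-almost everywhere;
   - injective: pi(g) = 1 in the ultraproduct only for g = 1;
   - pi(G) /\ prod_omega (H_i x K) = pi(H): the class of pi(g) lies in
     prod_omega (H_i x K) iff {i | pi(g)_i in H_i x K} is in omega. *)
Definition rel_sofic (G : Grp) (H : Subgroup G) (K : Grp) : Prop :=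
  exists (Gs : nat -> Grp) (Hs : forall i, Subgroup (Gs i)),
    (forall i, sofic (Gs i)) /\
    (forall i, amenable (subgroup_group (Hs i))) /\
    exists (U : (nat -> Prop) -> Prop)
           (pi : G -> forall i, prod_group (Gs i) K),
      free_ultrafilter U /\
      (forall g h : G, U (fun i => pi (gmul g h) i = gmul (pi g i) (pi h i))) /\
      (forall g : G, U (fun i => pi g i = gone) -> g = gone) /\
      (forall g : G, U (fun i => Hs i (pi g i).1) <-> H g).

(* Main.v *)
Require Import Defs.
Set Warnings "-notation-overridden".
From mathcomp Require Import all_boot fingroup perm.
From mathcomp Require Import zify.
From Stdlib Require Import Reals Lra Lia Classical FunctionalExtensionality PropExtensionality Cantor.

Set Implicit Arguments.
Unset Strict Implicit.


Fixpoint sumR (F : nat -> R) (n : nat) : R :=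
  match n with O => 0%R | S k => (sumR F k + F k)%R end.

Section Mean.
Variable X : Type.
Variable m : (X -> Prop) -> R.
Hypothesis m_ge0 : forall A, (0 <= m A)%R.
Hypothesis m_T : m (fun _ => True) = 1%R.
Hypothesis m_add : forall A B, (forall x, A x -> B x -> False) ->
   m (fun x => A x \/ B x) = (m A + m B)%R.

Local Open Scope R_scope.

Lemma m_ext A B : (forall x, A x <-> B x) -> m A = m B.
Proof.
move=> h; f_equal; apply: functional_extensionality => x;
apply: propositional_extensionality; exact: h.
Qed.

Lemma m_F : m (fun _ => False) = 0.
Proof.
have := m_add (A:=fun _ => False) (B:=fun _ => False) (fun _ a _ => a).
rewrite (m_ext (A:=fun x => False \/ False) (B:=fun _ => False)); first lra.
by move=> x; tauto.
Qed.

Lemma m_mono A B : (forall x, A x -> B x) -> m A <= m B.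
Proof.
move=> h.
have e := m_add (A:=A) (B:=fun x => B x /\ ~ A x) (fun x a b => proj2 b a).
rewrite (m_ext (A:=fun x => A x \/ B x /\ ~ A x) (B:=B)) in e.
  have := m_ge0 (fun x => B x /\ ~ A x); lra.
move=> x; split; first by case=> [/h|[]].
by move=> bx; case: (classic (A x)) => ax; [left|right].
Qed.

Lemma m_le1 A : m A <= 1.
Proof. rewrite -m_T; apply: m_mono => //. Qed.

Lemma sumR_ext F G n : (forall t, (t < n)%nat -> F t = G t) -> sumR F n = sumR G n.
Proof.
elim: n => [|n IH] h //=; rewrite IH ?h //; move=> t ht; apply: h; lia.
Qed.

Lemma sumR_le F G n : (forall t, (t < n)%nat -> F t <= G t) -> sumR F n <= sumR G n.
Proof.
elim: n => [|n IH] h /=; first lra.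
have := IH (fun t ht => h t ltac:(lia)); have := h n ltac:(lia); lra.
Qed.

Lemma sumR_add F G n : sumR (fun t => F t + G t) n = sumR F n + sumR G n.
Proof. elim: n => [|n IH] /=; [lra| rewrite IH; lra]. Qed.

Lemma sumR_const c n : sumR (fun _ => c) n = INR n * c.
Proof. elim: n => [|n IH]; first (simpl; lra). rewrite S_INR /= IH; lra. Qed.

Definition J n (h : X -> nat) := sumR (fun t => m (fun x => (t < h x)%nat)) n.

Lemma J_ext n h h' : (forall x, h x = h' x) -> J n h = J n h'.
Proof. move=> e; have -> : h = h' by apply: functional_extensionality. by []. Qed.

Lemma J_ge0 n h : 0 <= J n h.
Proof.
rewrite -(Rmult_0_r (INR n)) -sumR_const; apply: sumR_le => t _; exact: m_ge0.
Qed.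

Lemma J_le n h : J n h <= INR n.
Proof.
rewrite -(Rmult_1_r (INR n)) -sumR_const; apply: sumR_le => t _; exact: m_le1.
Qed.

Lemma J_big n k h : (forall x, (h x <= n)%nat) -> J (n + k) h = J n h.
Proof.
move=> hb; elim: k => [|k IH]; first by rewrite addn0.
rewrite addnS /J /= -/(J _ _) IH.
rewrite (m_ext (B:=fun _ => False)); first by rewrite m_F /J; lra.
move=> x; split => // H; have := hb x; lia.
Qed.

Lemma J_big' n n' h : (forall x, (h x <= n)%nat) -> (n <= n')%nat -> J n' h = J n h.
Proof. move=> hb le; rewrite -(subnKC le); exact: J_big. Qed.

Lemma J_mono n h h' : (forall x, (h x <= h' x)%nat) -> J n h <= J n h'.
Proof.
move=> hh; apply: sumR_le => t _; apply: m_mono => x; have := hh x; lia.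
Qed.

Lemma sum_level (h : X -> nat) (b : X -> bool) k :
  sumR (fun t => m (fun x => h x = t /\ b x)) k = m (fun x => (h x < k)%nat /\ b x).
Proof.
elim: k => [|k IH] /=.
  rewrite (m_ext (B:=fun _ => False)) ?m_F //; move=> x; split => //; lia.
rewrite IH -m_add; last by move=> x [h1 _] [h2 _]; lia.
apply: m_ext => x; split.
  case=> [[h1 h2]|[h1 h2]]; split => //; lia.
case=> h1 h2; case: (ltngtP (h x) k) => c; [left|lia|right]; split => //; lia.
Qed.

Lemma J_add1 n h (b : X -> bool) : (forall x, (h x <= n)%nat) ->
  J n.+1 (fun x => h x + b x)%nat = J n h + m (fun x => b x).
Proof.
move=> hb.
rewrite /J (@sumR_ext _ (fun t => m (fun x => (t < h x)%nat) + m (fun x => h x = t /\ b x))).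
  rewrite sumR_add sum_level /=.
  rewrite (m_ext (A:=fun x => (n < h x)%nat) (B:=fun _ => False)); last first.
    move=> x; split => // H; have := hb x; lia.
  rewrite m_F (m_ext (A:=fun x => (h x < n.+1)%nat /\ b x) (B:=fun x => b x)); first lra.
  move=> x; split; [by case| move=> ->; split => //; have := hb x; lia].
move=> t _; rewrite -m_add; last by move=> x h1 [h2 _]; lia.
apply: m_ext => x; split.
  case: (b x) => /= H; [case: (ltngtP t (h x)) => c; [left|lia|right]|left]; lia.
case=> [H| [H ->]]; lia.
Qed.

Lemma J_add M n h1 h2 : (forall x, (h1 x <= n)%nat) -> (forall x, (h2 x <= M)%nat) ->
  J (n + M) (fun x => h1 x + h2 x)%nat = J n h1 + J M h2.
Proof.
elim: M h2 => [|M IH] h2 b1 b2.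
  rewrite addn0 (@J_ext _ _ h1); first by rewrite /J /=; lra.
  move=> x; have := b2 x; lia.
pose h2' x := (h2 x - 1)%nat.
pose b x := (0 < h2 x)%nat.
rewrite (@J_ext _ _ (fun x => (h1 x + h2' x) + b x)%nat); last first.
  move=> x; rewrite /h2' /b; case: (h2 x) => [|k] /=; lia.
rewrite (@J_ext M.+1 h2 (fun x => h2' x + b x)%nat); last first.
  move=> x; rewrite /h2' /b; case: (h2 x) => [|k] /=; lia.
rewrite addnS J_add1; last by move=> x; have := b1 x; have := b2 x; rewrite /h2'; lia.
rewrite J_add1; last by move=> x; have := b2 x; rewrite /h2'; lia.
rewrite IH //; first lra.
by move=> x; have := b2 x; rewrite /h2'; lia.
Qed.

Lemma J_one : J 1 (fun _ => 1%nat) = 1.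
Proof.
rewrite /J /= (m_ext (B:=fun _ => True)) //; lra.
Qed.

Lemma J_scale k n h : (forall x, (h x <= n)%nat) ->
  J (k * n) (fun x => k * h x)%nat = INR k * J n h.
Proof.
move=> hb; elim: k => [|k IH].
  rewrite mul0n /J /=; lra.
rewrite mulSn (@J_ext _ _ (fun x => h x + k * h x)%nat); last by move=> x; rewrite mulSn.
rewrite J_add // ?IH ?S_INR; first lra.
by move=> x; rewrite leq_mul2l hb orbT.
Qed.

Definition fl (r : R) : nat := Z.to_nat (up r - 1).

Lemma fl_spec r : 0 <= r -> INR (fl r) <= r < INR (fl r) + 1.
Proof.
move=> r0; have [h1 h2] := archimed r.
have hz : (0 <= up r - 1)%Z.
  have : (0 < up r)%Z by apply: lt_IZR; lra.
  lia.
rewrite /fl INR_IZR_INZ Znat.Z2Nat.id // minus_IZR; lra.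
Qed.

Lemma fl_le k r : 0 <= r -> INR k <= r -> (k <= fl r)%nat.
Proof.
move=> r0 kr; have [_ h] := fl_spec r0.
have : (k < (fl r).+1)%coq_nat by apply: INR_lt; rewrite S_INR; lra.
lia.
Qed.

Lemma fl_lt k r : 0 <= r -> r < INR k + 1 -> (fl r <= k)%nat.
Proof.
move=> r0 kr; have [h _] := fl_spec r0.
have : (fl r < k.+1)%coq_nat by apply: INR_lt; rewrite S_INR; lra.
lia.
Qed.

Definition hN N (f : X -> R) x := fl (INR N.+1 * f x).
Definition L N f := J N.+1 (hN N f) / INR N.+1.

Definition b01 (f : X -> R) := forall x, 0 <= f x <= 1.

Lemma INRS_pos N : 0 < INR N.+1.
Proof. rewrite S_INR; have := pos_INR N; lra. Qed.

Lemma L_ge0 N f : 0 <= L N f.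
Proof.
rewrite /L; apply: Rmult_le_pos; first exact: J_ge0.
apply: Rlt_le; apply: Rinv_0_lt_compat; exact: INRS_pos.
Qed.

Lemma L_le1 N f : L N f <= 1.
Proof.
rewrite /L; have := J_le N.+1 (hN N f); have := INRS_pos N => p j.
apply: (Rmult_le_reg_r (INR N.+1)) => //.
rewrite Rmult_assoc Rinv_l; lra.
Qed.

Definition Iset f := fun r => exists N, r = L N f.

Lemma Iset_bound f : bound (Iset f).
Proof. exists 1 => r [N ->]; exact: L_le1. Qed.

Lemma Iset_ex f : exists r, Iset f r.
Proof. by exists (L 0 f), 0%nat. Qed.

Definition I f := proj1_sig (completeness (Iset f) (Iset_bound f) (Iset_ex f)).

Lemma I_ub N f : L N f <= I f.
Proof.
rewrite /I; case: completeness => c [ub _] /=; apply: ub; by exists N.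
Qed.

Lemma I_lub f c : (forall N, L N f <= c) -> I f <= c.
Proof.
rewrite /I; case: completeness => x [_ lub] /= h; apply: lub => r [N ->]; exact: h.
Qed.

Lemma I_ge0 f : 0 <= I f.
Proof. apply: Rle_trans (I_ub 0 f); exact: L_ge0. Qed.

Lemma hN_le N f : b01 f -> forall x, (hN N f x <= N.+1)%nat.
Proof.
move=> hf x; rewrite /hN; apply: fl_lt.
  have := hf x; have := INRS_pos N; nra.
have := hf x; have := INRS_pos N; nra.
Qed.

Lemma div_aux A B M' N' : 0 < M' -> 0 < N' -> N' * A <= M' * (B + 1) ->
  A / M' <= B / N' + / N'.
Proof.
move=> pM pN h.
have e1 : A / M' = (N' * A) / (N' * M') by field; lra.
have e2 : B / N' + / N' = (M' * (B + 1)) / (N' * M') by field; lra.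
rewrite e1 e2; apply: Rmult_le_compat_r => //.
apply: Rlt_le; apply: Rinv_0_lt_compat; nra.
Qed.

Lemma L_cmp M N f : b01 f -> L M f <= L N f + / INR N.+1.
Proof.
move=> hf.
set M' := M.+1; set N' := N.+1.
have pw : forall x, (N' * hN M f x <= M' * (hN N f x + 1))%nat.
  move=> x; rewrite /hN.
  have fx := hf x.
  have pM := INRS_pos M; have pN := INRS_pos N.
  have [a1 a2] := fl_spec (r:=INR M' * f x) ltac:(rewrite /M'; nra).
  have [b1 b2] := fl_spec (r:=INR N' * f x) ltac:(rewrite /N'; nra).
  apply/leP; apply: INR_le.
  rewrite !mult_INR plus_INR; change (INR 1) with 1.
  rewrite -/M' -/N' in pM pN *.
  have : INR N' * INR (fl (INR M' * f x)) <= INR N' * (INR M' * f x) by nra.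
  have : INR M' * (INR N' * f x) <= INR M' * (INR (fl (INR N' * f x)) + 1) by nra.
  nra.
have key : INR N' * J M' (hN M f) <= INR M' * (J N' (hN N f) + 1).
  rewrite -J_scale; last exact: hN_le.
  rewrite -(@J_big' (N' * M') (M' * (N' + 1))); last 2 first.
  - move=> x; rewrite leq_mul2l; apply/orP; right; exact: hN_le.
  - rewrite mulnC leq_mul2l; apply/orP; right; lia.
  apply: Rle_trans (J_mono _ pw) _.
  rewrite J_scale; last by move=> x; have := hN_le N hf x; rewrite -/N'; lia.
  rewrite J_add //; last exact: hN_le.
  rewrite J_one; lra.
rewrite /L; apply: div_aux => //; exact: INRS_pos.
Qed.

Lemma I_close N f : b01 f -> L N f <= I f <= L N f + / INR N.+1.
Proof.
move=> hf; split; first exact: I_ub.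
apply: I_lub => M; exact: L_cmp.
Qed.

Lemma L_add N f g : b01 f -> b01 g -> (forall x, f x + g x <= 1) ->
  L N f + L N g <= L N (fun x => f x + g x) <= L N f + L N g + / INR N.+1.
Proof.
move=> hf hg hfg.
have hs : b01 (fun x => f x + g x).
  move=> x; have := hf x; have := hg x; have := hfg x; lra.
set N' := N.+1.
have pN : 0 < INR N' := INRS_pos N.
have pw1 : forall x, (hN N f x + hN N g x <= hN N (fun x => (f x + g x)%R) x)%nat.
  move=> x; rewrite /hN -/N'; apply: fl_le.
    have := hs x; nra.
  have := hf x; have := hg x => fx gx.
  have [a1 a2] := fl_spec (r:=INR N' * f x) ltac:(nra).
  have [b1 b2] := fl_spec (r:=INR N' * g x) ltac:(nra).
  rewrite plus_INR; nra.
have pw2 : forall x, (hN N (fun x => (f x + g x)%R) x <= hN N f x + (hN N g x + 1))%nat.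
  move=> x; rewrite /hN -/N'; apply: fl_lt.
    have := hs x; nra.
  have := hf x; have := hg x => fx gx.
  have [a1 a2] := fl_spec (r:=INR N' * f x) ltac:(nra).
  have [b1 b2] := fl_spec (r:=INR N' * g x) ltac:(nra).
  rewrite !plus_INR; change (INR 1) with 1; nra.
have lo : J N' (hN N f) + J N' (hN N g) <= J N' (hN N (fun x => f x + g x)).
  rewrite -J_add; try exact: hN_le.
  rewrite -(@J_big' N' (N' + N') (hN N (fun x => f x + g x))); last 2 first.
  - exact: hN_le.
  - lia.
  exact: J_mono.
have hi : J N' (hN N (fun x => f x + g x)) <= J N' (hN N f) + J N' (hN N g) + 1.
  rewrite -(@J_big' N' (N' + (N' + 1)) (hN N (fun x => f x + g x))); last 2 first.
  - exact: hN_le.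
  - lia.
  apply: Rle_trans (J_mono _ pw2) _.
  rewrite J_add; last 2 first.
  - exact: hN_le.
  - move=> x; have := hN_le N hg x; rewrite -/N'; lia.
  rewrite J_add; try exact: hN_le; last by [].
  rewrite J_one; lra.
rewrite /L -/N'.
have pi : 0 < / INR N' by apply: Rinv_0_lt_compat.
split.
  rewrite /Rdiv -Rmult_plus_distr_r; apply: Rmult_le_compat_r; lra.
have -> : / INR N' = 1 * / INR N' by lra.
rewrite /Rdiv -!Rmult_plus_distr_r; apply: Rmult_le_compat_r; lra.
Qed.

Lemma small_zero d : (forall N, Rabs d <= 2 / INR N.+1) -> d = 0.
Proof.
move=> h; case: (Req_dec d 0) => // nz; exfalso.
have pd : 0 < Rabs d by apply: Rabs_pos_lt.
set N := fl (2 / Rabs d).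
have hd : 0 <= 2 / Rabs d by apply: Rlt_le; apply: Rdiv_lt_0_compat; lra.
have [_ h2] := fl_spec hd.
have := h N; rewrite S_INR -/N => h3.
have pN : 0 < INR N + 1 by have := pos_INR N; lra.
have k1 := Rmult_lt_compat_r (Rabs d) _ _ pd h2.
replace (2 / Rabs d * Rabs d) with 2 in k1 by (field; lra).
have k2 := Rmult_le_compat_r (INR N + 1) _ _ (Rlt_le _ _ pN) h3.
replace (2 / (INR N + 1) * (INR N + 1)) with 2 in k2 by (field; lra).
rewrite -/N in k1; nra.
Qed.

Lemma I_add f g : b01 f -> b01 g -> (forall x, f x + g x <= 1) ->
  I (fun x => f x + g x) = I f + I g.
Proof.
move=> hf hg hfg.
have hs : b01 (fun x => f x + g x).
  move=> x; have := hf x; have := hg x; have := hfg x; lra.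
apply: Rminus_diag_uniq; apply: small_zero => N.
have := I_close N hf; have := I_close N hg; have := I_close N hs.
have := L_add N hf hg hfg.
have p : 0 < / INR N.+1 by apply: Rinv_0_lt_compat; exact: INRS_pos.
rewrite /Rdiv => *; apply: Rabs_le; lra.
Qed.

Lemma I_one : I (fun _ => 1) = 1.
Proof.
have hL : forall N, L N (fun _ => 1) = 1.
  move=> N; rewrite /L (@J_ext _ _ (fun _ => N.+1)); last first.
    move=> x; rewrite /hN Rmult_1_r; apply/eqP; rewrite eqn_leq; apply/andP; split.
      apply: fl_lt; [exact: pos_INR| lra].
    apply: fl_le; [exact: pos_INR| lra].
  rewrite /J (@sumR_ext _ (fun _ => 1)); last first.
    move=> t ht; rewrite -m_T; apply: m_ext => x; split => // _.
  rewrite sumR_const Rmult_1_r; field; have := INRS_pos N; lra.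
apply: Rle_antisym.
  apply: I_lub => N; rewrite hL; lra.
apply: Rle_trans (I_ub 0 (fun _ => 1)); rewrite hL; lra.
Qed.

Lemma I_inv (tau : X -> X) f : (forall A, m (fun x => A (tau x)) = m A) ->
  I (fun x => f (tau x)) = I f.
Proof.
move=> ht.
have hL : forall N, L N (fun x => f (tau x)) = L N f.
  move=> N; rewrite /L /J /hN; congr (_ / _); apply: sumR_ext => t _.
  exact: (ht (fun y => (t < fl (INR N.+1 * f y))%nat)).
apply: Rle_antisym; apply: I_lub => N.
  rewrite hL; exact: I_ub.
rewrite -hL; exact: I_ub.
Qed.

Lemma I_ext f g : (forall x, f x = g x) -> I f = I g.
Proof. by move=> e; have -> : f = g by apply: functional_extensionality. Qed.

End Mean.


Local Open Scope R_scope.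

Section AmenProd.
Variables (G1 G2 : Grp) (H1 : Subgroup G1) (H2 : Subgroup G2).

Definition mkp (a : subgroup_group H1) (b : subgroup_group H2) :
  subgroup_group (prod_subgroup H1 H2) :=
  exist _ (proj1_sig a, proj1_sig b) (conj (proj2_sig a) (proj2_sig b)).

Lemma amenable_prod : amenable (subgroup_group H1) -> amenable (subgroup_group H2) ->
  amenable (subgroup_group (prod_subgroup H1 H2)).
Proof.
case=> m1 [p1 [q1 [r1 s1]]]; case=> m2 [p2 [q2 [r2 s2]]].
have m2b : forall A, 0 <= m2 A <= 1.
  move=> A; split; [exact: p2| exact: (m_le1 p2 q2 r2)].
exists (fun C => I p1 q1 r1 (fun a => m2 (fun b => C (mkp a b)))).
split; [| split; [| split]].
- move=> C; exact: I_ge0.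
- rewrite (I_ext p1 q1 r1 (g:=fun _ => 1)); first exact: I_one.
  by move=> a; rewrite q2.
- move=> C D disj.
  rewrite (I_ext p1 q1 r1 (g:=fun a => m2 (fun b => C (mkp a b)) + m2 (fun b => D (mkp a b)))).
    apply: I_add.
    + move=> a; exact: m2b.
    + move=> a; exact: m2b.
    + move=> a; rewrite -r2; first exact: (m2b _).2.
      by move=> b; apply: disj.
  by move=> a; rewrite r2 //; move=> b; apply: disj.
- move=> [[g1 g2] [hg1 hg2]] C.
  pose u1 : subgroup_group H1 := exist _ g1 hg1.
  pose u2 : subgroup_group H2 := exist _ g2 hg2.
  have e : forall a b, gmul (ginv (exist (fun x => H1 x.1 /\ H2 x.2) (g1, g2) (conj hg1 hg2)
                                  : subgroup_group (prod_subgroup H1 H2))) (mkp a b)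
                      = mkp (gmul (ginv u1) a) (gmul (ginv u2) b).
    by move=> [a ha] [b hb]; apply: sg_eq.
  rewrite (I_ext p1 q1 r1 (g:=fun a => m2 (fun b => C (mkp (gmul (ginv u1) a) b)))).
    exact: (I_inv p1 q1 r1 (tau:=fun a => gmul (ginv u1) a)
              (fun a => m2 (fun b => C (mkp a b))) (s1 u1)).
  move=> a.
  rewrite -(s2 u2 (fun b => C (mkp (gmul (ginv u1) a) b))).
  by congr m2; apply: functional_extensionality => b; rewrite e.
Qed.
End AmenProd.

Local Close Scope R_scope.


Lemma In_map_fst (A B : Type) (F : seq (A * B)) g : List.In g F -> List.In g.1 (map fst F).
Proof. elim: F => //= a F IH [->|h]; [left|right; exact: IH h] => //. Qed.

Lemma In_map_snd (A B : Type) (F : seq (A * B)) g : List.In g F -> List.In g.2 (map snd F).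
Proof. elim: F => //= a F IH [->|h]; [left|right; exact: IH h] => //. Qed.

Lemma card_enum_pre (T : finType) (P : pred T) :
  #|[set i : 'I_#|{: T}| | P (enum_val i)]| = #|[set t | P t]|.
Proof.
rewrite -(card_imset _ enum_val_inj); apply: eq_card => t; rewrite [in RHS]inE.
apply/imsetP/idP => [[i]|Pt]; first by rewrite inE => Pi ->.
by exists (enum_rank t); rewrite ?inE enum_rankK.
Qed.

Section SProd.
Variables (n1 n2 : nat).
Local Notation T := ('I_n1 * 'I_n2)%type.

Definition sig2 (p1 : {perm 'I_n1}) (p2 : {perm 'I_n2}) (t : T) : T := (p1 t.1, p2 t.2).

Definition fperm (p1 : {perm 'I_n1}) (p2 : {perm 'I_n2}) (i : 'I_#|{: T}|) : 'I_#|{: T}| :=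
  enum_rank (sig2 p1 p2 (enum_val i)).

Lemma fperm_inj p1 p2 : injective (fperm p1 p2).
Proof.
move=> i j /enum_rank_inj; rewrite /sig2.
case E1: (enum_val i) => [a b]; case E2: (enum_val j) => [c d] /= [/perm_inj e1 /perm_inj e2].
by apply: enum_val_inj; rewrite E1 E2 e1 e2.
Qed.

Definition pperm p1 p2 : {perm 'I_#|{: T}|} := perm (@fperm_inj p1 p2).

Lemma card_T : #|{: T}| = (n1 * n2)%nat.
Proof. by rewrite card_prod !card_ord. Qed.

Lemma err_card (a1 b1 c1 : {perm 'I_n1}) (a2 b2 c2 : {perm 'I_n2}) :
  (#|[set i : 'I_#|{: T}| | pperm a1 a2 i != pperm b1 b2 (pperm c1 c2 i)]|
   <= #|[set x | a1 x != b1 (c1 x)]| * n2 + n1 * #|[set y | a2 y != b2 (c2 y)]|)%nat.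
Proof.
have -> : #|[set i : 'I_#|{: T}| | pperm a1 a2 i != pperm b1 b2 (pperm c1 c2 i)]| =
          #|[set t : T | sig2 a1 a2 t != sig2 b1 b2 (sig2 c1 c2 t)]|.
  rewrite -[RHS]card_enum_pre; apply: eq_card => i; rewrite !inE !permE /fperm enum_rankK.
  by rewrite (inj_eq enum_rank_inj).
apply: leq_trans (_ : #|setX [set x | a1 x != b1 (c1 x)] [set: 'I_n2] :|:
                       setX [set: 'I_n1] [set y | a2 y != b2 (c2 y)]| <= _)%nat.
  apply: subset_leq_card; apply/subsetP => [[x y]]; rewrite !inE /sig2 /=.
  by rewrite xpair_eqE negb_and andbT.
apply: leq_trans (leq_card_setU _ _) _.
by rewrite !cardsX !cardsT !card_ord.
Qed.

Lemma fix_card1 (a1 : {perm 'I_n1}) (a2 : {perm 'I_n2}) :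
  (#|[set i : 'I_#|{: T}| | pperm a1 a2 i == i]| <= #|[set x | a1 x == x]| * n2)%nat.
Proof.
have -> : #|[set i : 'I_#|{: T}| | pperm a1 a2 i == i]| =
          #|[set t : T | sig2 a1 a2 t == t]|.
  rewrite -[RHS]card_enum_pre; apply: eq_card => i; rewrite !inE !permE /fperm.
  by rewrite -{2}(enum_valK i) (inj_eq enum_rank_inj).
apply: leq_trans (_ : #|setX [set x | a1 x == x] [set: 'I_n2]| <= _)%nat.
  apply: subset_leq_card; apply/subsetP => [[x y]]; rewrite !inE /sig2 /=.
  by case/eqP => -> _; rewrite eqxx.
by rewrite !cardsX !cardsT !card_ord.
Qed.

Lemma fix_card2 (a1 : {perm 'I_n1}) (a2 : {perm 'I_n2}) :
  (#|[set i : 'I_#|{: T}| | pperm a1 a2 i == i]| <= n1 * #|[set y | a2 y == y]|)%nat.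
Proof.
have -> : #|[set i : 'I_#|{: T}| | pperm a1 a2 i == i]| =
          #|[set t : T | sig2 a1 a2 t == t]|.
  rewrite -[RHS]card_enum_pre; apply: eq_card => i; rewrite !inE !permE /fperm.
  by rewrite -{2}(enum_valK i) (inj_eq enum_rank_inj).
apply: leq_trans (_ : #|setX [set: 'I_n1] [set y | a2 y == y]| <= _)%nat.
  apply: subset_leq_card; apply/subsetP => [[x y]]; rewrite !inE /sig2 /=.
  by case/eqP => _ ->; rewrite eqxx.
by rewrite !cardsX !cardsT !card_ord.
Qed.
End SProd.

Local Open Scope R_scope.

Lemma sofic_prod (G1 G2 : Grp) : sofic G1 -> sofic G2 -> sofic (prod_group G1 G2).
Proof.
move=> s1 s2 F eps he.
have he2 : 0 < eps / 2 by lra.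
case: (s1 (map fst F) _ he2) => n1 [phi1 [A1 B1]].
case: (s2 (map snd F) _ he2) => n2 [phi2 [A2 B2]].
have pos1 : forall g : prod_group G1 G2, List.In g F -> 0 < INR n1.
  move=> g hg; have h := A1 _ _ (In_map_fst hg) (In_map_fst hg).
  have h' := Rle_lt_trans _ _ _ (pos_INR _) h; nra.
have pos2 : forall g : prod_group G1 G2, List.In g F -> 0 < INR n2.
  move=> g hg; have h := A2 _ _ (In_map_snd hg) (In_map_snd hg).
  have h' := Rle_lt_trans _ _ _ (pos_INR _) h; nra.
exists #|{: 'I_n1 * 'I_n2}|, (fun g => pperm (phi1 g.1) (phi2 g.2)).
have cT : INR #|{: 'I_n1 * 'I_n2}| = INR n1 * INR n2 by rewrite card_T mult_INR.
split.
- move=> g h hg hh.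
  have p1 := pos1 _ hg; have p2 := pos2 _ hg.
  have e1 := A1 _ _ (In_map_fst hg) (In_map_fst hh).
  have e2 := A2 _ _ (In_map_snd hg) (In_map_snd hh).
  have c := err_card (phi1 (gmul g h).1) (phi1 g.1) (phi1 h.1)
                     (phi2 (gmul g h).2) (phi2 g.2) (phi2 h.2).
  move/leP: c => /le_INR; rewrite plus_INR !mult_INR => c.
  rewrite cT.
  set x1 := INR #|_| in e1 c; set x2 := INR #|_| in e2 c.
  set y := INR #|_| in c |- *.
  nra.
- move=> g hg ng.
  have p1 := pos1 _ hg; have p2 := pos2 _ hg.
  rewrite cT.
  case: (classic (g.1 = gone)) => g1.
    have g2 : g.2 <> gone.
      move=> g2; apply: ng; case: g g1 g2 {hg} => a b /= -> -> //.
    have e2 := B2 _ (In_map_snd hg) g2.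
    have := fix_card2 (phi1 g.1) (phi2 g.2).
    move/leP => /le_INR; rewrite mult_INR => c.
    set x2 := INR #|_| in e2 c; set y := INR #|_| in c |- *.
    have k := Rmult_lt_compat_l _ _ _ p1 e2.
    have k' : 0 < eps * (INR n1 * INR n2) by apply: Rmult_lt_0_compat => //; apply: Rmult_lt_0_compat.
    lra.
  have e1 := B1 _ (In_map_fst hg) g1.
  have := fix_card1 (phi1 g.1) (phi2 g.2).
  move/leP => /le_INR; rewrite mult_INR => c.
  set x1 := INR #|_| in e1 c; set y := INR #|_| in c |- *.
  have k := Rmult_lt_compat_r _ _ _ p2 e1.
  have k' : 0 < eps * (INR n1 * INR n2) by apply: Rmult_lt_0_compat => //; apply: Rmult_lt_0_compat.
  lra.
Qed.

Local Close Scope R_scope.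


Section UF.
Variable U : (nat -> Prop) -> Prop.
Hypothesis hU : free_ultrafilter U.

Lemma uf_mono (A B : nat -> Prop) : (forall i, A i -> B i) -> U A -> U B.
Proof. by case: hU => _ [_ [h _]]; apply: h. Qed.

Lemma uf_and (A B : nat -> Prop) : U A -> U B -> U (fun i => A i /\ B i).
Proof. by case: hU => _ [_ [_ [h _]]]; apply: h. Qed.

Lemma uf_T : U (fun _ => True).
Proof. by case: hU. Qed.

Lemma uf_nF : ~ U (fun _ => False).
Proof. by case: hU => _ []. Qed.

Lemma uf_ult (A : nat -> Prop) : U A \/ U (fun i => ~ A i).
Proof. by case: hU => _ [_ [_ [_ [h _]]]]; apply: h. Qed.

Lemma uf_free n : U (fun i => n <= i).
Proof. by case: hU => _ [_ [_ [_ [_ h]]]]; apply: h. Qed.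

Lemma uf_const (c : Prop) : U (fun _ => c) -> c.
Proof.
move=> h; apply: NNPP => nc; apply: uf_nF; apply: uf_mono h => i //.
Qed.
End UF.

Definition W (U1 U2 : (nat -> Prop) -> Prop) (A : nat -> Prop) : Prop :=
  U1 (fun i => U2 (fun j => A (to_nat (i, j)))).

Lemma W_uf U1 U2 : free_ultrafilter U1 -> free_ultrafilter U2 -> free_ultrafilter (W U1 U2).
Proof.
move=> h1 h2; rewrite /W; split; [|split; [|split; [|split; [|split]]]].
- apply: (uf_mono h1) (uf_T h1) => i _; exact: uf_T.
- move=> h; apply: (uf_nF h1); apply: (uf_mono h1) h => i h'; exact: (uf_nF h2).
- move=> A B hAB h; apply: (uf_mono h1) h => i; apply: (uf_mono h2) => j; exact: hAB.
- move=> A B hA hB; apply: (uf_mono h1) (uf_and h1 hA hB) => i [a b].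
  exact: uf_and.
- move=> A; case: (uf_ult h1 (fun i => U2 (fun j => A (to_nat (i, j))))) => h; [left|right] => //.
  apply: (uf_mono h1) h => i nA.
  by case: (uf_ult h2 (fun j => A (to_nat (i, j)))).
- move=> n; apply: (uf_mono h1) (uf_free h1 n) => i hi.
  apply: (uf_mono h2) (uf_T h2) => j _.
  have := to_nat_non_decreasing i j; lia.
Qed.

Lemma W_intro U1 U2 (E1 E2 A : nat -> Prop) : free_ultrafilter U1 -> free_ultrafilter U2 ->
  U1 E1 -> U2 E2 -> (forall k, E1 (of_nat k).1 -> E2 (of_nat k).2 -> A k) -> W U1 U2 A.
Proof.
move=> h1 h2 e1 e2 hA; rewrite /W; apply: (uf_mono h1) e1 => i hi.
apply: (uf_mono h2) e2 => j hj; apply: hA; rewrite cancel_of_to //.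
Qed.

Lemma W_elim U1 U2 (E1 E2 A : nat -> Prop) : free_ultrafilter U1 -> free_ultrafilter U2 ->
  W U1 U2 A -> (forall k, A k -> E1 (of_nat k).1 /\ E2 (of_nat k).2) -> U1 E1 /\ U2 E2.
Proof.
move=> h1 h2 hW hA.
have hW' : U1 (fun i => U2 (fun j => E1 i /\ E2 j)).
  apply: (uf_mono h1) hW => i; apply: (uf_mono h2) => j /hA; rewrite cancel_of_to //.
split.
  apply: (uf_mono h1) hW' => i h; apply: (uf_const h2); apply: (uf_mono h2) h => j [] //.
apply: (uf_const h1); apply: (uf_mono h1) hW' => i; apply: (uf_mono h2) => j [] //.
Qed.

Theorem proposition2p9 (G1 G2 K1 K2 : Grp) (H1 : Subgroup G1) (H2 : Subgroup G2) :
  rel_sofic H1 K1 -> rel_sofic H2 K2 ->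
  rel_sofic (prod_subgroup H1 H2) (prod_group K1 K2).
Proof.
case=> Gs1 [Hs1 [sof1 [am1 [U1 [pi1 [uf1 [hom1 [inj1 sub1]]]]]]]].
case=> Gs2 [Hs2 [sof2 [am2 [U2 [pi2 [uf2 [hom2 [inj2 sub2]]]]]]]].
exists (fun k => prod_group (Gs1 (of_nat k).1) (Gs2 (of_nat k).2)).
exists (fun k => prod_subgroup (Hs1 (of_nat k).1) (Hs2 (of_nat k).2)).
split; first by move=> k; apply: sofic_prod.
split; first by move=> k; apply: amenable_prod.
exists (W U1 U2).
exists (fun (g : prod_group G1 G2) k =>
  (((pi1 g.1 (of_nat k).1).1, (pi2 g.2 (of_nat k).2).1),
   ((pi1 g.1 (of_nat k).1).2, (pi2 g.2 (of_nat k).2).2))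
  : prod_group (prod_group (Gs1 (of_nat k).1) (Gs2 (of_nat k).2)) (prod_group K1 K2)).
split; first exact: W_uf.
split.
  move=> g h.
  apply: (W_intro uf1 uf2 (hom1 g.1 h.1) (hom2 g.2 h.2)) => k e1 e2 /=.
  by rewrite e1 e2.
split.
  move=> [g1 g2] hW.
  have [e1 e2] : U1 (fun i => pi1 g1 i = gone) /\ U2 (fun j => pi2 g2 j = gone).
    apply: (W_elim uf1 uf2 hW) => k E; split.
      have := f_equal (fun p => (p.1.1, p.2.1)) E.
      by case: (pi1 g1 (of_nat k).1) => x y /= [-> ->].
    have := f_equal (fun p => (p.1.2, p.2.2)) E.
    by case: (pi2 g2 (of_nat k).2) => x y /= [-> ->].
  by rewrite (inj1 _ e1) (inj2 _ e2).
move=> [g1 g2] /=; split.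
  move=> hW.
  have [e1 e2] : U1 (fun i => Hs1 i (pi1 g1 i).1) /\ U2 (fun j => Hs2 j (pi2 g2 j).1).
    by apply: (W_elim uf1 uf2 hW) => k [].
  by split; [apply/sub1|apply/sub2].
case=> a b; apply: (W_intro uf1 uf2 (proj2 (sub1 g1) a) (proj2 (sub2 g2) b)) => k e1 e2.
by split.
Qed.
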